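(* Let two processes $\sigma$ and $\zeta$ be constructed from initial states $\sigma(\cdot,0),\zeta(\cdot,0)\in\Sigma$ with the same realization of the space-time Poisson point process. (a) For a positive integer $m$ let $D_m(t)=\{x:\zeta(x,t)\ge\sigma(x,t)+m\}$. If $x\in D_m(t)$, then $\zeta(x,t)$ has no maximizer $y\in D_m(0)^c$; and if $x\in D_m(t)^c$, then $\sigma(x,t)$ has no maximizer $y\in D_m(0)$. (b) Suppose $\sigma(y,0)\le\zeta(y,0)\le\sigma(y,0)+h$ for all $y\in\mathbb R^d$, for a fixed positive integer $h$. Then $\sigma(x,t)\le\zeta(x,t)\le\sigma(x,t)+h$ for all $x$ and $t\ge0$, and with $A(t)=\{x:\zeta(x,t)=\sigma(x,t)+h\}$ we have $A(t)=\{x:\sigma(x,t)\text{ has a maximizer }y\in A(0)\}$. (c) If $h=1$ in (b), then additionally $A(t)^c=\{x:\zeta(x,t)\text{ has a maximizer }y\in A(0)^c\}$.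
   Context: Order: for $x,y\in\mathbb R^d$, $x\le y$ iff $x_i\le y_i$ for all $i$; $|x|_\infty=\max_i|x_i|$; $d\ge2$. $\mathbb Z^*=\mathbb Z\cup\{\pm\infty\}$. The state space $\Sigma$ is the set of functions $\sigma:\mathbb R^d\to\mathbb Z^*$ such that (i) $x\le y$ implies $\sigma(x)\le\sigma(y)$; (ii) for every cube $[-q\mathbf 1,q\mathbf 1]$ there are finite partitions $-q=s_i^0<\dots<s_i^{m_i}=q$ of each coordinate axis such that $\sigma$ is constant on each rectangle $\prod_i[s_i^{k_i},s_i^{k_i+1})$; (iii) for every $b\in\mathbb R^d$, $\lim_{M\to\infty}\sup\{|y|_\infty^{-d/(d+1)}\sigma(y):y\le b,|y|_\infty\ge M\}=-\infty$. A rate-one Poisson point process on $\mathbb R^d\times(0,\infty)$ is given; $\mathbf H((y,0),(x,t))$ is the maximal number of Poisson points on a strictly increasing chain (coordinatewise order in $\mathbb R^{d+1}$) in $\{(\eta,s):y<\eta\le x,0<s\le t\}$ ($=0$ if $t=0$). Processes are defined by $\sigma(x,t)=\sup_{y\le x}\{\sigma(y,0)+\mathbf H((y,0),(x,t))\}$ and similarly for $\zeta$ (the supremum is attained almost surely). We say $\sigma(x,t)$ has a maximizer $y$ if $y\le x$ and $\sigma(x,t)=\sigma(y,0)+\mathbf H((y,0),(x,t))$. *)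

(* Defs.v *)
From HB Require Import structures.
From mathcomp Require Import all_boot all_order all_algebra.
From mathcomp Require Import all_classical all_reals all_analysis.
From Stdlib Require List.
Set Implicit Arguments. Unset Strict Implicit. Unset Printing Implicit Defensive.
Import Order.TTheory GRing.Theory Num.Theory.
Local Open Scope classical_set_scope.
Local Open Scope ring_scope.

Section Defs.
Variables (R : realType) (d : nat).

Definition pt := 'I_d -> R.
Definition spt := (pt * R)%type.

Definition leV (x y : pt) : Prop := forall i, x i <= y i.
Definition ltV (x y : pt) : Prop := forall i, x i < y i.
Definition supnorm (x : pt) : R := \big[Num.max/0]_(i < d) `|x i|.

Definition leST (p q : spt) : Prop := leV p.1 q.1 /\ p.2 <= q.2.
Definition ltST (p q : spt) : Prop := leST p q /\ p <> q.

(* values in Z* = Z u {+oo,-oo}, seen inside \bar R *)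
Definition is_Zstar (v : \bar R) : Prop :=
  v = +oo%E \/ v = -oo%E \/ exists z : int, v = (z%:~R)%:E.

Definition is_state (s : pt -> \bar R) : Prop :=
  (forall x, is_Zstar (s x)) /\
  (forall x y, leV x y -> (s x <= s y)%E) /\
  (* (ii) locally piecewise constant on a finite product grid *)
  (forall q : R, 0 < q ->
     exists part : 'I_d -> seq R,
       (forall i, sorted <%R (part i) /\ (1 < size (part i))%N /\
                  head 0 (part i) = - q /\ last 0 (part i) = q) /\
       (forall x y : pt,
          (forall i, exists k : nat, (k.+1 < size (part i))%N /\
              nth 0 (part i) k <= x i < nth 0 (part i) k.+1 /\
              nth 0 (part i) k <= y i < nth 0 (part i) k.+1) ->
          s x = s y)) /\
  (forall b : pt,
     (fun M : R => ereal_sup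
        [set ((powR (supnorm y) (- (d%:R / (d.+1)%:R)))%:E * s y)%E
          | y in [set y | leV y b /\ M <= supnorm y]])
       @ +oo --> -oo%E).

(* a realization of the point process: a locally finite subset of R^d x (0,oo) *)
Definition is_config (w : set spt) : Prop :=
  (forall p, w p -> 0 < p.2) /\
  (forall q : R, finite_set (w `&` [set p | supnorm p.1 <= q /\ p.2 <= q])).

Fixpoint incr_chain (l : seq spt) : Prop :=
  match l with
  | p :: ((q :: _) as l') => ltST p q /\ incr_chain l'
  | _ => True
  end.

Definition chain_in (w : set spt) (y x : pt) (t : R) (l : seq spt) : Prop :=
  incr_chain l /\
  (forall p, List.In p l -> w p /\ ltV y p.1 /\ leV p.1 x /\ 0 < p.2 <= t).

Definition Hlpp (w : set spt) (y x : pt) (t : R) : \bar R :=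
  ereal_sup [set ((size l)%:R)%:E | l in chain_in w y x t].

Definition evolve (w : set spt) (s0 : pt -> \bar R) (x : pt) (t : R) : \bar R :=
  ereal_sup [set (s0 y + Hlpp w y x t)%E | y in [set y | leV y x]].

Definition maximizer (w : set spt) (s0 : pt -> \bar R) (x : pt) (t : R) (y : pt) : Prop :=
  leV y x /\ evolve w s0 x t = (s0 y + Hlpp w y x t)%E.

End Defs.

(* Main.v *)
Require Import Defs.
From HB Require Import structures.
From mathcomp Require Import all_boot all_order all_algebra.
From mathcomp Require Import all_classical all_reals all_analysis.
From mathcomp Require Import lra zify.
From mathcomp Require Import finmap.
Set Implicit Arguments. Unset Strict Implicit. Unset Printing Implicit Defensive.
Import Order.TTheory GRing.Theory Num.Theory.
Local Open Scope classical_set_scope.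
Local Open Scope ring_scope.

Lemma abs_le_supnorm (R : realType) (d : nat) (x : pt R d) i : `|x i| <= supnorm x.
Proof. rewrite /supnorm. exact: (le_bigmax 0 (fun i => `|x i|) i). Qed.

Lemma supnorm_le (R : realType) (d : nat) (x : pt R d) c :
  0 <= c -> (forall i, `|x i| <= c) -> supnorm x <= c.
Proof. move=> c0 H; rewrite /supnorm; apply: bigmax_le => // i _; exact: H. Qed.

Lemma supnorm_ge0 (R : realType) (d : nat) (x : pt R d) : 0 <= supnorm x.
Proof.
rewrite /supnorm; apply: (big_ind (fun v => 0 <= v)) => //.
  by move=> a b ha hb; rewrite le_max ha.
Qed.

Definition ltb (R : realType) (d : nat) (p q : spt R d) : bool := `[< ltST p q >].

Lemma leST_anti (R : realType) (d : nat) (p q : spt R d) :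
  leST p q -> leST q p -> p = q.
Proof.
case: p => p1 p2; case: q => q1 q2 [/= h1 h2] [/= h3 h4].
have -> : p2 = q2 by apply: le_anti; rewrite h2 h4.
congr pair; apply: funext => i; apply: le_anti; by rewrite h1 h3.
Qed.

Lemma leST_trans (R : realType) (d : nat) (p q r : spt R d) :
  leST p q -> leST q r -> leST p r.
Proof.
move=> [h1 h2] [h3 h4]; split; last exact: le_trans h4.
move=> i; exact: le_trans (h1 i) (h3 i).
Qed.

Lemma ltb_trans (R : realType) (d : nat) : transitive (@ltb R d).
Proof.
move=> q p r /asboolP [h1 h2] /asboolP [h3 h4]; apply/asboolP; split.
  exact: leST_trans h1 h3.
move=> epr; subst r; apply: h2; exact: leST_anti h1 h3.
Qed.

Lemma ltb_irr (R : realType) (d : nat) : irreflexive (@ltb R d).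
Proof. by move=> p; apply/asboolP => -[_]. Qed.

Lemma incr_sorted (R : realType) (d : nat) (l : seq (spt R d)) :
  incr_chain l -> sorted (@ltb R d) l.
Proof.
elim: l => [//|p l IH] /=.
case: l IH => [//|q l'] IH [h1 h2] /=.
apply/andP; split; first exact/asboolP.
exact: IH.
Qed.

Lemma in_In (T : eqType) (l : seq T) x : x \in l -> List.In x l.
Proof.
elim: l => [//|a l IH]; rewrite inE => /orP [/eqP ->|h]; [by left|right; exact: IH].
Qed.

Lemma chain_bound (R : realType) (d : nat) (w : set (spt R d)) (hw : is_config w)
  (y x : pt R d) (t : R) : exists N : nat, forall l, chain_in w y x t l -> (size l <= N)%N.
Proof.
set q := supnorm x + supnorm y + `|t|.
set F := w `&` [set p : spt R d | supnorm p.1 <= q /\ p.2 <= q].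
have fF : finite_set F by case: hw => _; apply.
exists (size (finmap.enum_fset (fset_set F))) => l [hinc hin].
apply: uniq_leq_size.
  apply: (@sorted_uniq _ (@ltb R d)); [exact: ltb_trans|exact: ltb_irr|exact: incr_sorted].
move=> p /in_In /hin [wp [hyp [hpx /andP [p0 ptt]]]].
have : p \in fset_set F.
  rewrite in_fset_set //; apply/mem_set; split => //; split.
  apply: supnorm_le.
    rewrite /q; have := normr_ge0 t; have := supnorm_ge0 x; have := supnorm_ge0 y; lra.
  move=> i; rewrite ler_norml; apply/andP.
  have := abs_le_supnorm x i; have := abs_le_supnorm y i.
  have := hyp i; have := hpx i; have := normr_ge0 t.
  have := ler_norm (x i); have := ler_norm (- y i); rewrite normrN /q.
  have := supnorm_ge0 x; have := supnorm_ge0 y; move=> *; split; lra.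
  have := ler_norm t; have := supnorm_ge0 x; have := supnorm_ge0 y; rewrite /q; lra.
by [].
Qed.

Lemma Hlpp_nat (R : realType) (d : nat) (w : set (spt R d)) (hw : is_config w)
  (y x : pt R d) (t : R) : exists n : nat, Hlpp w y x t = (n%:R)%:E.
Proof.
have [N hN] := chain_bound hw y x t.
pose P := fun n : nat => `[< exists l, chain_in w y x t l /\ size l = n >].
have exP : exists n, P n.
  exists 0%N; apply/asboolP; exists [::]; split => //; split => //.
have ubP : forall n, P n -> (n <= N)%N.
  by move=> n /asboolP [l [hl <-]]; exact: hN.
case: (ex_maxnP exP ubP) => n0 /asboolP [l0 [hl0 hs0]] hmax.
exists n0; apply: le_anti; apply/andP; split.
  apply: ge_ereal_sup => v [l hl <-]; rewrite lee_fin ler_nat.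
  by apply: hmax; apply/asboolP; exists l.
apply: ereal_sup_ubound; exists l0 => //; by rewrite hs0.
Qed.

Lemma evolve_ub (R : realType) (d : nat) (w : set (spt R d)) (s : pt R d -> \bar R)
  (x : pt R d) (t : R) (y : pt R d) :
  leV y x -> (s y + Hlpp w y x t <= evolve w s x t)%E.
Proof. by move=> h; apply: ereal_sup_ubound; exists y. Qed.

Lemma addeI_fin (R : realType) (a b r : \bar R) :
  r \is a fin_num -> (a + r = b + r)%E -> a = b.
Proof.
move=> hr e; apply: le_anti; apply/andP; split.
  by rewrite -(leeD2rE _ _ hr) e.
by rewrite -(leeD2rE _ _ hr) e.
Qed.

Lemma zstarD (R : realType) (v : \bar R) (n : nat) :
  is_Zstar v -> is_Zstar (v + (n%:R)%:E)%E.
Proof.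
case=> [->|[->|[i ->]]]; [by left|by right; left|right; right].
by exists (i + n%:Z); rewrite intrD.
Qed.

Lemma int_squeeze (R : realType) (i j : int) :
  (i%:~R : R) <= j%:~R -> (j%:~R : R) <= i%:~R + 1 -> (j%:~R : R) <> i%:~R + 1 ->
  (j%:~R : R) = i%:~R.
Proof.
rewrite -intrD1 !ler_int => h1 h2 h3.
have : (j = i + 1)%R \/ (j = i)%R by lia.
by case=> e; subst j => //; rewrite intrD1 in h3.
Qed.

Lemma zsqueeze (R : realType) (a b : \bar R) : is_Zstar a -> is_Zstar b ->
  (a <= b)%E -> (b <= a + 1%:E)%E -> b <> (a + 1%:E)%E ->
  a \is a fin_num /\ b = a.
Proof.
case=> [->|[->|[i ->]]].
- move=> _; rewrite leye_eq => /eqP -> _ h; by exfalso; apply: h.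
- move=> _ _ h1 h2; exfalso; apply: h2; move: h1 => /=; rewrite leeNy_eq => /eqP -> //.
case=> [->|[->|[j ->]]].
- by move=> _; rewrite leye_eq.
- by rewrite leeNy_eq.
rewrite -EFinD !lee_fin => h1 h2 h3; split => //.
congr EFin; apply: int_squeeze => // e; apply: h3; by rewrite e.
Qed.

Unset Implicit Arguments.

Theorem lemma9p1 (R : realType) (d : nat) (hd : (2 <= d)%N)
  (w : set (spt R d)) (hw : is_config w)
  (s0 z0 : pt R d -> \bar R) (hs0 : is_state s0) (hz0 : is_state z0)
  (attained : forall (x : pt R d) (t : R), 0 <= t ->
     (exists y, maximizer w s0 x t y) /\ (exists y, maximizer w z0 x t y)) :
  (* (a) *)
  (forall (m : nat), (0 < m)%N -> forall (t : R), 0 <= t -> forall x : pt R d,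
     ((evolve w z0 x t >= evolve w s0 x t + (m%:R)%:E)%E ->
        ~ exists y, maximizer w z0 x t y /\ ~ (z0 y >= s0 y + (m%:R)%:E)%E) /\
     (~ (evolve w z0 x t >= evolve w s0 x t + (m%:R)%:E)%E ->
        ~ exists y, maximizer w s0 x t y /\ (z0 y >= s0 y + (m%:R)%:E)%E)) /\
  (* (b) *)
  (forall (h : nat), (0 < h)%N ->
     (forall y, (s0 y <= z0 y)%E /\ (z0 y <= s0 y + (h%:R)%:E)%E) ->
     forall (t : R), 0 <= t ->
       (forall x, (evolve w s0 x t <= evolve w z0 x t)%E /\
                  (evolve w z0 x t <= evolve w s0 x t + (h%:R)%:E)%E) /\
       (forall x, evolve w z0 x t = (evolve w s0 x t + (h%:R)%:E)%E <->
                  exists y, maximizer w s0 x t y /\ z0 y = (s0 y + (h%:R)%:E)%E)) /\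
  (* (c) *)
  ((forall y, (s0 y <= z0 y)%E /\ (z0 y <= s0 y + 1%:E)%E) ->
     forall (t : R), 0 <= t -> forall x,
       evolve w z0 x t <> (evolve w s0 x t + 1%:E)%E <->
       exists y, maximizer w z0 x t y /\ z0 y <> (s0 y + 1%:E)%E).
Proof.
have Hfin : forall y x t, Hlpp w y x t \is a fin_num.
  by move=> y x t; have [n ->] := Hlpp_nat hw y x t.
have PA : forall (m : nat), forall (t : R), forall x : pt R d,
     ((evolve w z0 x t >= evolve w s0 x t + (m%:R)%:E)%E ->
        ~ exists y, maximizer w z0 x t y /\ ~ (z0 y >= s0 y + (m%:R)%:E)%E) /\
     (~ (evolve w z0 x t >= evolve w s0 x t + (m%:R)%:E)%E ->
        ~ exists y, maximizer w s0 x t y /\ (z0 y >= s0 y + (m%:R)%:E)%E).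
  move=> m t x; split.
    move=> hge [y [[yx hz] hn]].
    have hlt : (z0 y < s0 y + (m%:R)%:E)%E by rewrite ltNge; apply/negP.
    have : (evolve w z0 x t < evolve w z0 x t)%E.
      rewrite [X in (X < _)%E]hz.
      apply: (lt_le_trans _ hge).
      apply: (@lt_le_trans _ _ (s0 y + (m%:R)%:E + Hlpp w y x t)%E).
        by rewrite lteD2rE.
      rewrite addeAC; apply: leeD2r; exact: evolve_ub.
    by rewrite ltxx.
  move=> hn [y [[yx hs] hz]]; apply: hn.
  rewrite hs addeAC.
  apply: (le_trans _ (evolve_ub w z0 t yx)); exact: leeD2r.
have PB : forall (h : nat),
     (forall y, (s0 y <= z0 y)%E /\ (z0 y <= s0 y + (h%:R)%:E)%E) ->
     forall (t : R), 0 <= t ->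
       (forall x, (evolve w s0 x t <= evolve w z0 x t)%E /\
                  (evolve w z0 x t <= evolve w s0 x t + (h%:R)%:E)%E) /\
       (forall x, evolve w z0 x t = (evolve w s0 x t + (h%:R)%:E)%E <->
                  exists y, maximizer w s0 x t y /\ z0 y = (s0 y + (h%:R)%:E)%E).
  move=> h hsz t t0.
  have part1 : forall x, (evolve w s0 x t <= evolve w z0 x t)%E /\
                  (evolve w z0 x t <= evolve w s0 x t + (h%:R)%:E)%E.
    move=> x; split.
      case: (attained x t t0) => [[y [yx hs]] _]; rewrite hs.
      apply: (le_trans _ (evolve_ub w z0 t yx)); apply: leeD2r; exact: (hsz y).1.
    case: (attained x t t0) => [_ [y [yx hz]]]; rewrite hz.
    apply: (le_trans (leeD2r _ (hsz y).2)); rewrite addeAC.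
    apply: leeD2r; exact: evolve_ub.
  split => // x; split.
    move=> heq; case: (attained x t t0) => [_ [y [yx hz]]]; exists y.
    have e1 : (z0 y + Hlpp w y x t <= s0 y + (h%:R)%:E + Hlpp w y x t)%E.
      exact: leeD2r (hsz y).2.
    have e2 : (s0 y + (h%:R)%:E + Hlpp w y x t <= evolve w s0 x t + (h%:R)%:E)%E.
      rewrite addeAC; apply: leeD2r; exact: evolve_ub.
    have e3 : (evolve w s0 x t + (h%:R)%:E = z0 y + Hlpp w y x t)%E by rewrite -heq hz.
    have E1 : (z0 y + Hlpp w y x t = s0 y + (h%:R)%:E + Hlpp w y x t)%E.
      by apply: le_anti; rewrite e1 /= -e3 e2.
    have E2 : (s0 y + (h%:R)%:E + Hlpp w y x t = evolve w s0 x t + (h%:R)%:E)%E.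
      by apply: le_anti; rewrite e2 /= e3 e1.
    split; first split => //.
      by apply: (@addeI_fin _ _ _ (h%:R)%:E) => //; rewrite -E2 addeAC.
    exact: addeI_fin (Hfin y x t) E1.
  move=> [y [[yx hs] hz]]; apply: le_anti; rewrite (part1 x).2 /=.
  rewrite hs addeAC -hz; exact: evolve_ub.
split; first by move=> m _ t _ x; exact: PA.
split; first by move=> h _; exact: PB.
move=> hsz t t0 x.
have [hb1 hb2] := PB 1%N hsz t t0.
split.
  move=> hne.
  case: (attained x t t0) => [[y' [yx' hs']] [y [yx hz]]].
  have [n' hn'] := Hlpp_nat hw y' x t.
  have [n hn] := Hlpp_nat hw y x t.
  have zs : is_Zstar (evolve w s0 x t) by rewrite hs' hn'; apply: zstarD; exact: hs0.1.
  have zz : is_Zstar (evolve w z0 x t) by rewrite hz hn; apply: zstarD; exact: hz0.1.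
  have [fs eq] := zsqueeze zs zz (hb1 x).1 (hb1 x).2 hne.
  have E : evolve w z0 x t = (z0 y' + Hlpp w y' x t)%E.
    apply: le_anti; rewrite evolve_ub // andbT eq hs'; apply: leeD2r; exact: (hsz y').1.
  have E2 : z0 y' = s0 y'.
    by apply: addeI_fin (Hfin y' x t) _; rewrite -E -hs' eq.
  exists y'; split; first by split.
  rewrite E2.
  move: fs; rewrite hs' fin_numD => /andP [].
  case: (s0 y') => // r _ _; rewrite -EFinD => -[] hr; lra.
move=> [y [[yx hz] hne]] heq.
apply: ((PA 1%N t x).1 _); first by rewrite heq.
exists y; split; first by split.
move=> hge; apply: hne; apply: le_anti; rewrite hge andbT; exact: (hsz y).2.
Qed.
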